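(* Let $\mathcal C\subseteq2^{[n]}$ be a code. If the polar complex $\Gamma(\mathcal C)$ is shellable, then either $\mathcal C=2^{[n]}$ or $\Gamma(\mathcal C)$ is collapsible.
   Context: The polar complex $\Gamma(\mathcal C)$ is the simplicial complex on $[n]\sqcup\{\bar1,\dots,\bar n\}$ consisting of all subsets of the sets $\sigma\sqcup\{\bar i:i\in[n]\setminus\sigma\}$, $\sigma\in\mathcal C$; it is pure of dimension $n-1$. A pure $k$-dimensional complex is shellable if its facets admit an ordering $F_1,\dots,F_t$ such that for each $i>1$, the complex of all subsets of $F_i$ intersected with the complex of all subsets of $F_1,\dots,F_{i-1}$ is pure of dimension $k-1$. A free pair in a complex $\Delta$ is $(\sigma,\tau)$ with $\tau$ a facet, $\sigma\subsetneq\tau$, and $\sigma$ contained in no other facet; collapsing along $\sigma$ replaces $\Delta$ by $\{\nu\in\Delta:\nu\not\supseteq\sigma\}$; $\Delta$ is collapsible if a finite sequence of collapses yields the void complex $\{\}$ (with no faces), so $\{\}$ is collapsible and $\{\emptyset\}$ is not. *)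

(* Defs.v *)
From mathcomp Require Import all_boot.
Set Implicit Arguments. Unset Strict Implicit. Unset Printing Implicit Defensive.

(* A simplicial complex on a finite vertex type V is a family of faces
   {set {set V}} (assumed downward closed where relevant). *)

Section Complexes.
Variable V : finType.

Definition is_facet (D : {set {set V}}) (F : {set V}) : bool :=
  (F \in D) && [forall (G : {set V} | G \in D), (F \subset G) ==> (G == F)].

Definition down (A : {set {set V}}) : {set {set V}} :=
  [set G : {set V} | [exists F in A, G \subset F]].

Definition pure_card (d : nat) (D : {set {set V}}) : Prop :=
  forall F, is_facet D F -> #|F| = d.

(* shellable: pure of dimension k (facets of size k+1 =: d) and the facets
   admit an ordering F_1..F_t such that for i>1, <F_i> ∩ <F_1..F_{i-1}>
   is pure of dimension k-1 (facets of size d-1). *)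
Definition shellable (D : {set {set V}}) : Prop :=
  exists d : nat, pure_card d D /\
  exists s : seq {set V},
    [/\ uniq s, (forall F, F \in s = is_facet D F) &
       forall i, 0 < i < size s ->
         pure_card d.-1
           (down [set nth set0 s i] :&: down [set F in take i s])].

Definition free_pair (D : {set {set V}}) (sigma tau : {set V}) : Prop :=
  [/\ is_facet D tau, sigma \proper tau &
      forall F, is_facet D F -> sigma \subset F -> F = tau].

Definition collapse (D : {set {set V}}) (sigma : {set V}) : {set {set V}} :=
  [set nu in D | ~~ (sigma \subset nu)].

Inductive collapsible : {set {set V}} -> Prop :=
| collapsible_void : collapsible set0
| collapsible_step D sigma tau :
    free_pair D sigma tau -> collapsible (collapse D sigma) -> collapsible D.

End Complexes.

(* Polar complex: vertices [n] ⊔ {1bar..nbar} modeled as 'I_n + 'I_n,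
   inl i = i, inr i = ibar. *)
Definition polar_facet (n : nat) (sigma : {set 'I_n}) : {set 'I_n + 'I_n} :=
  (inl @: sigma) :|: (inr @: ~: sigma).

Definition polar (n : nat) (C : {set {set 'I_n}}) : {set {set 'I_n + 'I_n}} :=
  down ((@polar_facet n) @: C).

(* Main.v *)
Require Import Defs.
From mathcomp Require Import all_boot all_order all_algebra zify.
Set Implicit Arguments. Unset Strict Implicit. Unset Printing Implicit Defensive.
Import Order.TTheory GRing.Theory Num.Theory.
Local Open Scope ring_scope.

Section Interval.
Variable V : finType.

Lemma sum_interval (X Y : {set V}) :
  \sum_(G : {set V} | (X \subset G) && (G \subset Y)) ((-1) ^+ #|G| : int)
  = if X == Y then (-1) ^+ #|Y| else 0.
Proof.
case: eqP => [<-|neXY].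
  rewrite (big_pred1 X) // => G /=.
  by rewrite /pred1 /= eqEsubset andbC.
case: (boolP (X \subset Y)) => sXY; last first.
  rewrite big_pred0 // => G; apply/negbTE; apply/negP => /andP[h1 h2].
  by rewrite (subset_trans h1 h2) in sXY.
have : ~~ (Y \subset X) by apply/negP => h; apply: neXY; apply/eqP; rewrite eqEsubset sXY h.
case/subsetPn => w wY wX.
pose h (G : {set V}) := if w \in G then G :\ w else w |: G.
have hK : involutive h.
  move=> G; rewrite /h; case: (boolP (w \in G)) => wG.
    rewrite !inE eqxx /= setD1K //.
  by rewrite setU11 setU1K.
set S := \sum_(G | _) _.
have : S = - S.
  rewrite /S {1}(reindex_inj (inv_inj hK)) -sumrN; apply: eq_big => G.
    rewrite /h; case: (boolP (w \in G)) => wG; congr andb; apply/idP/idP;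
      move/subsetP => H; apply/subsetP => z zX.
    - by move: (H z zX); rewrite !inE => /andP[].
    - rewrite !inE (H z zX) andbT; apply/negP => /eqP ez; by rewrite -ez zX in wX.
    - case: (eqVneq z w) => [->|nzw] //; apply: H; by rewrite !inE nzw.
    - apply: H; move: zX; rewrite !inE => /andP[] //.
    - move: (H z zX); rewrite !inE => /orP[/eqP ez|] //; by rewrite -ez zX in wX.
    - by rewrite !inE (H z zX) orbT.
    - apply: H; by rewrite !inE zX orbT.
    - move: zX; rewrite !inE => /orP[/eqP -> //|]; exact: H.
  move=> _; rewrite /h; case: (boolP (w \in G)) => wG.
    by rewrite [in RHS](cardsD1 w G) wG add1n exprS mulN1r opprK.
  by rewrite cardsU1 wG exprS mulN1r.
move=> e; lia.
Qed.
End Interval.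

Section Gen.
Variables (V : finType) (D : {set {set V}}) (d : nat) (s : seq {set V}).
Hypotheses (Hpure : pure_card d D) (Huniq : uniq s)
  (Hfac : forall F, (F \in s) = is_facet D F)
  (Hsh : forall i, (0 < i < size s)%N ->
     pure_card d.-1 (down [set nth set0 s i] :&: down [set F in take i s])).

Definition Dk k := down [set F in take k s].
Definition Fk k := nth set0 s k.
Definition Rk k := [set w in Fk k | (Fk k :\ w) \in Dk k].

Lemma down_sub (A : {set {set V}}) (G H : {set V}) : G \in down A -> H \subset G -> H \in down A.
Proof.
rewrite !inE => /existsP[F /andP[FA GF]] HG.
by apply/existsP; exists F; rewrite FA (subset_trans HG GF).
Qed.

Lemma facet_above (K : {set {set V}}) (G : {set V}) : G \in K -> exists M, is_facet K M /\ G \subset M.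
Proof.
move=> GK.
pose P := (fun M : {set V} => (M \in K) && (G \subset M)).
have P0 : P G by rewrite /P GK subxx.
case: (@arg_maxnP _ G P (fun M : {set V} => #|M|) P0) => M /andP[MK GM] Mmax.
exists M; split=> //; rewrite /is_facet MK /=; apply/forallP => G'; apply/implyP => G'K.
apply/implyP => MG'; rewrite eq_sym eqEcard MG' /=.
by apply: Mmax; rewrite /P G'K (subset_trans GM MG').
Qed.

Lemma incomp (F F' : {set V}) : F \in s -> F' \in s -> F \subset F' -> F = F'.
Proof.
rewrite !Hfac => /andP[FD /forallP Fm] /andP[F'D _] FF'.
by move: (Fm F') => /implyP /(_ F'D) /implyP /(_ FF') /eqP.
Qed.

Lemma Fk_in k : (k < size s)%N -> Fk k \in s.
Proof. by move=> ks; rewrite /Fk mem_nth. Qed.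

Lemma Fk_notin k : (k < size s)%N -> Fk k \notin take k s.
Proof.
move=> ks; move: Huniq; rewrite -{1}(cat_take_drop k s) (drop_nth set0 ks).
rewrite cat_uniq => /and3P[_ /hasPn H _]; apply: H; by rewrite inE eqxx.
Qed.

Lemma card_Fk k : (k < size s)%N -> #|Fk k| = d.
Proof. by move=> ks; apply: Hpure; rewrite -Hfac Fk_in. Qed.

Lemma Dk0 : Dk 0 = set0.
Proof. by apply/setP => G; rewrite !inE take0; apply/existsP => -[F]; rewrite inE. Qed.

Lemma Dk_succ k (G : {set V}) : (k < size s)%N ->
  (G \in Dk k.+1) = (G \in Dk k) || (G \subset Fk k).
Proof.
move=> ks; rewrite /Dk !inE (take_nth set0 ks); apply/existsP/orP.
  case=> F /andP[]; rewrite inE mem_rcons inE => /orP[/eqP ->|Ft] GF.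
    by right.
  by left; apply/existsP; exists F; rewrite inE Ft.
case=> [/existsP[F /andP[]]|GF].
  by rewrite inE => Ft GF; exists F; rewrite inE mem_rcons inE Ft orbT.
by exists (Fk k); rewrite inE mem_rcons inE eqxx.
Qed.

Lemma Dk_mono k (G : {set V}) : G \in Dk k -> G \in Dk k.+1.
Proof.
rewrite /Dk !inE => /existsP[F /andP[]]; rewrite inE => Ft GF.
apply/existsP; exists F; rewrite inE GF andbT.
case: (ltnP k (size s)) => ks.
  by rewrite (take_nth set0 ks) mem_rcons inE Ft orbT.
have h1 : (size s <= k.+1)%N by apply: leqW.
by move: Ft; rewrite (take_oversize h1) (take_oversize ks).
Qed.

Lemma Lkey k (G : {set V}) : (k < size s)%N -> G \subset Fk k ->
  (G \in Dk k) = ~~ (Rk k \subset G).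
Proof.
move=> ks GF; apply/idP/idP.
- move=> GD.
  have k0 : (0 < k)%N by case: k ks GF GD => // ??; rewrite Dk0 inE.
  have GK : G \in down [set Fk k] :&: Dk k.
    by rewrite inE GD andbT inE; apply/existsP; exists (Fk k); rewrite inE eqxx.
  case: (facet_above GK) => M [Mf GM].
  have cM := Hsh (ltac:(by rewrite k0 ks) : (0 < k < size s)%N) Mf.
  move: (Mf) => /andP[]; rewrite inE => /andP[MF MD] _.
  have MFk : M \subset Fk k.
    by move: MF; rewrite inE => /existsP[F /andP[]]; rewrite inE => /eqP ->.
  have neM : M != Fk k.
    apply/negP => /eqP eM; move: MD; rewrite inE => /existsP[F /andP[]].
    rewrite inE eM => Ft FkF.
    have Fs : F \in s by rewrite (mem_take Ft).
    have := incomp (Fk_in ks) Fs FkF => eF.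
    by move: (Fk_notin ks); rewrite eF Ft.
  have : ~~ (Fk k \subset M).
    by apply/negP => h; apply: (negP neM); rewrite eqEsubset MFk h.
  case/subsetPn => w wF wM.
  have eM : M = Fk k :\ w.
    apply/eqP; rewrite eqEcard; apply/andP; split.
      apply/subsetP => z zM; rewrite !inE (subsetP MFk z zM) andbT.
      by apply/negP => /eqP ezw; rewrite -ezw zM in wM.
    have := cardsD1 w (Fk k); rewrite wF card_Fk // cM; lia.
  apply/subsetPn; exists w => //.
    by rewrite inE wF -eM.
  by apply/negP => wG; rewrite (subsetP GM w wG) in wM.
- case/subsetPn => w; rewrite inE => /andP[wF FD] wG.
  apply: (down_sub FD); apply/subsetP => z zG; rewrite !inE (subsetP GF z zG) andbT.
  by apply/negP => /eqP ezw; rewrite -ezw zG in wG.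
Qed.

Lemma Rk_sub k : Rk k \subset Fk k.
Proof. by apply/subsetP => w; rewrite inE => /andP[]. Qed.

Lemma Rk_notin k : (k < size s)%N -> Rk k \notin Dk k.
Proof. by move=> ks; rewrite Lkey // ?Rk_sub // subxx. Qed.

Lemma facet_Dk k : (k < size s)%N -> is_facet (Dk k.+1) (Fk k).
Proof.
move=> ks; rewrite /is_facet Dk_succ // subxx orbT /=.
apply/forallP => G; apply/implyP; rewrite Dk_succ // => /orP[GD|GF]; apply/implyP => FG.
  move: GD; rewrite inE => /existsP[F /andP[]]; rewrite inE => Ft GF.
  have eF := incomp (Fk_in ks) (mem_take Ft) (subset_trans FG GF).
  by move: (Fk_notin ks); rewrite eF Ft.
by rewrite eqEsubset GF FG.
Qed.

Lemma facets_Dk k (F : {set V}) : (k < size s)%N -> is_facet (Dk k.+1) F -> Rk k \subset F -> F = Fk k.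
Proof.
move=> ks /andP[]; rewrite Dk_succ // => /orP[FD|FF] /forallP Fm RF.
  by move: (Rk_notin ks); rewrite (down_sub FD RF).
have : Fk k \in Dk k.+1 by rewrite Dk_succ // subxx orbT.
by move=> FkD; move: (Fm (Fk k)); rewrite FkD FF /= => /eqP.
Qed.

Lemma collapse_Dk k : (k < size s)%N -> collapse (Dk k.+1) (Rk k) = Dk k.
Proof.
move=> ks; apply/setP => G; rewrite inE Dk_succ //.
case: (boolP (G \in Dk k)) => GD /=.
  by apply/negP => RG; move: (Rk_notin ks); rewrite (down_sub GD RG).
case: (boolP (G \subset Fk k)) => GF //=.
by move: GD; rewrite Lkey // negbK => ->.
Qed.

Lemma collapsible_Dk : (forall k, (k < size s)%N -> Rk k != Fk k) ->
  forall k, (k <= size s)%N -> collapsible (Dk k).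
Proof.
move=> Hno; elim=> [|k IH] ks; first by rewrite Dk0; constructor.
apply: (@collapsible_step _ _ (Rk k) (Fk k)).
  split; first exact: facet_Dk.
    by rewrite properEneq Hno // Rk_sub.
  by move=> F Ff RF; apply: facets_Dk.
by rewrite collapse_Dk //; apply: IH; apply: ltnW.
Qed.

Lemma sum_Dk (L : {set V}) (f : {set V} -> int) m : (m <= size s)%N ->
  \sum_(G : {set V} | (G \in Dk m) && (L \subset G)) f G
  = \sum_(k < m) \sum_(G : {set V} | (Rk k :|: L \subset G) && (G \subset Fk k)) f G.
Proof.
elim: m => [|m IH] ms.
  by rewrite big_ord0 big_pred0 // => G; rewrite Dk0 inE.
rewrite big_ord_recr /= -IH ?(ltnW ms) // (bigID (fun G => G \in Dk m)) /=.
congr (_ + _); apply: eq_bigl => G.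
  case: (boolP (G \in Dk m)) => GD; rewrite ?andbT ?andbF ?(Dk_mono GD) //.
rewrite Dk_succ // subUset.
case: (boolP (G \subset Fk m)) => GF.
  by rewrite Lkey // negbK; case: (Rk m \subset G); case: (L \subset G).
by rewrite !andbF orbF; case: (G \in Dk m); rewrite ?andbF.
Qed.
End Gen.

Section Polar.
Variables (n : nat) (C : {set {set 'I_n}}).
Local Notation V := ('I_n + 'I_n)%type.
Local Notation PF := (@polar_facet n).

Lemma PFE (w : V) (sg : {set 'I_n}) :
  (w \in PF sg) = match w with inl e => e \in sg | inr e => e \notin sg end.
Proof.
rewrite /polar_facet inE; case: w => e.
  rewrite mem_imset; last exact: inl_inj.
  have -> : (inl e \in [set inr x | x in ~: sg]) = false.
    by apply/negP => /imsetP [y _ h].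
  by rewrite orbF.
rewrite (mem_imset _ _ (@inr_inj _ _)) inE.
have -> : (inr e \in [set inl x | x in sg]) = false.
  by apply/negP => /imsetP [y _ h].
by [].
Qed.

Lemma PF_sub (a b : {set 'I_n}) : PF a \subset PF b -> a = b.
Proof.
move/subsetP => H; apply/setP => e.
case: (boolP (e \in a)) => ea.
  by move: (H (inl e)); rewrite !PFE => ->.
by move: (H (inr e)); rewrite !PFE => /(_ ea) /negbTE ->.
Qed.

Lemma PF_inj : injective PF.
Proof. by move=> a b e; apply: PF_sub; rewrite e subxx. Qed.

Lemma facet_polar (F : {set V}) : is_facet (polar C) F = (F \in PF @: C).
Proof.
apply/idP/idP.
  case/andP; rewrite /polar inE => /existsP[F0 /andP[]] /imsetP[t tC ->] FP /forallP Fm.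
  have : PF t \in polar C by rewrite /polar inE; apply/existsP; exists (PF t); rewrite imset_f ?subxx.
  by move=> Pt; move: (Fm (PF t)); rewrite Pt FP /= => /eqP <-; rewrite imset_f.
case/imsetP => t tC ->; rewrite /is_facet /polar inE; apply/andP; split.
  by apply/existsP; exists (PF t); rewrite imset_f ?subxx.
apply/forallP => G; apply/implyP; rewrite inE => /existsP[F0 /andP[]] /imsetP[u uC ->] Gu.
apply/implyP => tG; have := PF_sub (subset_trans tG Gu) => etu; subst u.
by rewrite eqEsubset Gu tG.
Qed.

Definition sd (a b : {set 'I_n}) := [set e | (e \in a) != (e \in b)].
Lemma in_sd a b e : (e \in sd a b) = ((e \in a) != (e \in b)).
Proof. by rewrite inE. Qed.

Section Shell.
Variables (d : nat) (s : seq {set V}).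
Hypotheses (Hpure : pure_card d (polar C)) (Huniq : uniq s)
  (Hfac : forall F, (F \in s) = is_facet (polar C) F)
  (Hsh : forall i, (0 < i < size s)%N ->
     pure_card d.-1 (down [set nth set0 s i] :&: down [set F in take i s])).

Lemma inS (F : {set V}) : F \in s -> exists2 t, t \in C & F = PF t.
Proof. by rewrite Hfac facet_polar => /imsetP[t tC ->]; exists t. Qed.

Lemma polar_eq : polar C = Dk s (size s).
Proof.
rewrite /Dk take_size /polar; congr down; apply/setP => F.
by rewrite inE Hfac facet_polar.
Qed.

Variable i : nat.
Hypotheses (Hi : (i < size s)%N) (HR : Rk s i = Fk s i).

Definition sgi := [set e | inl e \in Fk s i].
Lemma Fk_i : Fk s i = PF sgi.
Proof.
have [t _ et] := inS (Fk_in Hi).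
rewrite /sgi et; congr PF; apply/setP => e; by rewrite inE PFE.
Qed.

Definition Pset := [set t | PF t \in take i.+1 s].

Lemma Pset_C : Pset \subset C.
Proof.
apply/subsetP => t; rewrite inE => /mem_take /inS [u uC /PF_inj ->] //.
Qed.

Lemma inDk (G : {set V}) :
  (G \in Dk s i.+1) = [exists r, (r \in Pset) && (G \subset PF r)].
Proof.
rewrite /Dk inE; apply/existsP/existsP.
  case=> F /andP[]; rewrite inE => Ft GF.
  have [r _ er] := inS (mem_take Ft).
  by exists r; rewrite inE -er Ft.
case=> r /andP[]; rewrite inE => rP Gr.
by exists (PF r); rewrite inE rP.
Qed.

Lemma Pset_full_gen (sg0 : {set 'I_n}) : Fk s i = PF sg0 -> Pset = setT.
Proof.
move=> Hsg.
apply/setP => y; rewrite in_setT; case: (boolP (y \in Pset)) => // yP; exfalso.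
pose P := fun t => t \notin Pset.
have Py : P y by [].
case: (@arg_minnP _ y P (fun t => #|sd sg0 t|) Py).
move=> x xP xmin.
set A := sd sg0 x.
set L := PF sg0 :&: PF x.
pose good (t : {set 'I_n}) := [forall e, (e \notin A) ==> ((e \in t) == (e \in sg0))] && (t != x).
have key : forall t : {set 'I_n}, good t -> t \in Pset.
  move=> t /andP[/forallP gt ntx]; apply/negPn/negP => tP.
  have := xmin t tP; apply/negP; rewrite -ltnNge; apply: proper_card.
  apply/properP; split.
    apply/subsetP => e; rewrite /A !in_sd; apply: contraR => eA.
    by move: (gt e); rewrite /A in_sd eA /= => /eqP ->; rewrite eqxx.
  have : exists e, (e \in t) != (e \in x).
    apply/existsP; move: ntx; apply: contraR; rewrite negb_exists => /forallP H.
    by apply/eqP/setP => e; move: (H e); rewrite negbK => /eqP.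
  case=> e te; exists e.
    rewrite /A in_sd; move: (gt e); rewrite /A in_sd.
    by case: (e \in t) te; case: (e \in sg0); case: (e \in x).
  rewrite in_sd negbK; move: (gt e); rewrite /A in_sd.
  by case: (e \in t) te; case: (e \in sg0); case: (e \in x).
pose tau (G : {set V}) := [set e | (inl e \in G) || ((e \in sg0) && (inr e \notin G))].
pose X (t : {set 'I_n}) := L :|: (PF t :\: PF sg0).
have inX : forall (w : V) t, (w \in X t) = ((w \in PF sg0) && (w \in PF x)) || ((w \notin PF sg0) && (w \in PF t)).
  by move=> w t; rewrite /X /L in_setU in_setI in_setD.
set S := \sum_(G : {set V} | (G \in Dk s i.+1) && (L \subset G)) ((-1) ^+ #|G| : int).
have S1 : S != 0.
  rewrite /S (sum_Dk Hpure Huniq Hfac Hsh) //.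
  under eq_bigr => k _ do rewrite sum_interval.
  have -> : \sum_(k < i.+1) (if Rk s k :|: L == Fk s k then (-1) ^+ #|Fk s k| else 0 : int)
      = (-1) ^+ d * \sum_(k < i.+1) (if Rk s k :|: L == Fk s k then 1 else 0).
    rewrite mulr_sumr; apply: eq_bigr => k _; case: ifP => _; rewrite ?mulr1 ?mulr0 //.
    by rewrite (card_Fk Hpure Hfac) // (leq_trans (ltn_ord k) Hi).
  rewrite mulf_neq0 ?signr_eq0 // (bigD1 ord_max) //=.
  have -> : Rk s i :|: L == Fk s i.
    by apply/eqP; rewrite HR; apply/setUidPl; rewrite Hsg /L subsetIl.
  have : 0 <= \sum_(k < i.+1 | k != ord_max) (if Rk s k :|: L == Fk s k then 1 else 0 : int).
    by apply: sumr_ge0 => k _; case: ifP.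
  move=> h /=; by rewrite gt_eqF // (lt_le_trans ltr01) // lerDl.
have cons : forall (G : {set V}) r e, G \subset PF r -> inl e \in G -> inr e \notin G.
  move=> G r e /subsetP Gr h1; apply/negP => h2.
  by move: (Gr _ h1) (Gr _ h2); rewrite !PFE => ->.
have point : forall (G : {set V}) t,
  ((G \in Dk s i.+1) && (L \subset G)) && (tau G == t)
  = good t && ((X t \subset G) && (G \subset PF t)).
  move=> G t; apply/idP/idP.
    case/andP => /andP[GD LG] /eqP <-.
    move: GD; rewrite inDk => /existsP[r /andP[rP Gr]].
    have GT : G \subset PF (tau G).
      apply/subsetP => -[e|e] h; rewrite PFE inE ?h //.
      rewrite andbF orbF; apply/negP => h'; by move: (cons G r e Gr h'); rewrite h.
    have XG : X (tau G) \subset G.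
      apply/subsetP => w; rewrite /X inE => /orP[wL|]; first exact: (subsetP LG).
      rewrite inE !PFE; case: w => e; rewrite inE.
      - by case: (inl e \in G); case: (e \in sg0).
      - by case: (inl e \in G); case: (e \in sg0); case: (inr e \in G).
    have gT : good (tau G).
      apply/andP; split.
        apply/forallP => e; apply/implyP; rewrite /A in_sd negbK => /eqP ex.
        case: (boolP (e \in sg0)) => es.
          have : inl e \in G by apply: (subsetP LG); rewrite /L inE !PFE -ex es.
          by move=> h; rewrite inE h.
        have : inr e \in G by apply: (subsetP LG); rewrite /L inE !PFE -ex es.
        move=> h; move: (subsetP GT _ h); rewrite PFE => h'; by rewrite (negbTE h').
      apply/negP => /eqP ex.
      have : PF x \subset G.
        apply/subsetP => w wx; case: (boolP (w \in PF sg0)) => ws.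
          by apply: (subsetP LG); rewrite /L inE ws wx.
        by apply: (subsetP XG); rewrite /X in_setU in_setD ex wx ws orbT.
      move=> xG; have := PF_sub (subset_trans xG Gr) => exr.
      by move: xP; rewrite /P exr rP.
    by rewrite gT XG GT.
  case/andP => gt0 /andP[XG GT]; have tP := key t gt0.
  apply/andP; split.
    rewrite inDk; apply/andP; split.
      by apply/existsP; exists t; rewrite tP GT.
    by apply: subset_trans XG; apply: subsetUl.
  apply/eqP/setP => e; rewrite inE.
  move: (subsetP GT (inl e)) (subsetP GT (inr e)) (subsetP XG (inl e)) (subsetP XG (inr e)).
  rewrite !inX !PFE.
  case: (e \in t); case: (e \in sg0); case: (e \in x); case: (inl e \in G); case: (inr e \in G); 
    move=> /= h1 h2 h3 h4; first [ by [] | by case: (h1 isT) | by case: (h2 isT) | by case: (h3 isT) | by case: (h4 isT) | idtac ].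
have S2 : S = 0.
  rewrite /S (partition_big tau predT) //=.
  apply: big1 => u _.
  rewrite (eq_bigl _ _ (point^~ u)).
  case: (boolP (good u)) => gt /=; last by rewrite big_pred0.
  rewrite sum_interval; case: eqP => // eX; exfalso.
  case/andP: gt => /forallP gf ntx.
  have [e te] : exists e, (e \in u) != (e \in x).
    apply/existsP; move: ntx; apply: contraR; rewrite negb_exists => /forallP H.
    by apply/eqP/setP => e; move: (H e); rewrite negbK => /eqP.
  move: (gf e) (congr1 (fun Z : {set V} => (inl e : V) \in Z) eX) (congr1 (fun Z : {set V} => (inr e : V) \in Z) eX).
  rewrite /A in_sd !inX !PFE.
  by move: te; case: (e \in u); case: (e \in sg0); case: (e \in x).
by rewrite S2 eqxx in S1.
Qed.

End Shell.
End Polar.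

Theorem lemma7p5 (n : nat) (C : {set {set 'I_n}}) :
  shellable (polar C) ->
  C = [set: {set 'I_n}] \/ collapsible (polar C).
Proof.
case=> d [Hpure [s [Huniq Hfac Hsh]]].
case: (boolP [exists k : 'I_(size s), Rk s k == Fk s k]).
  case/existsP => k /eqP HR; left.
  have Hk := ltn_ord k.
  have [t _ Ht] := inS Hfac (Fk_in Hk).
  apply/eqP; rewrite eqEsubset subsetT /=.
  rewrite -(Pset_full_gen Hpure Huniq Hfac Hsh Hk HR Ht).
  exact: Pset_C Hfac k.
rewrite negb_exists => /forallP Hno; right.
rewrite (polar_eq Hfac).
apply: (collapsible_Dk Hpure Huniq Hfac Hsh) => // k ks.
exact: (Hno (Ordinal ks)).
Qed.
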